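(* Let $F\in\mathbb{R}[x]$ be non-constant, $s\ge5$ an integer, $\alpha,\beta\in\mathbb{R}$ with $\alpha\ne0$, and $Q=F\circ T_s\circ(\alpha x+\beta)$, with $n=\deg Q$. 1) If $Ch_2(Q)=Ch_3(Q)=0$, then either $\alpha=\pm1$ and $\beta=0$, or $$4\beta^2=\frac{6}{(n-1)(2n-1)},\qquad \alpha^2=\frac{2n-4}{2n-1}.$$ 2) If $Ch_2(Q)=Ch_4(Q)=0$, then either $\alpha=\pm1$ and $\beta=0$, or $$4\beta^2=\frac{12}{(n-1)(2n-1)},\qquad \alpha^2=\frac{2n-7}{2n-1}.$$ In particular, in both cases, unless $\alpha=\pm1$ and $\beta=0$, one has $\alpha^2<1$ and $\beta\ne0$.
   Context: $T_k$ denotes the Chebyshev polynomial of the first kind of degree $k$, $T_k(\cos\phi)=\cos(k\phi)$. Every real polynomial $Q$ of degree $n$ can be uniquely written as $Q=\sum_{k=0}^n d_kT_k$ with $d_k\in\mathbb{R}$; set $Ch_i(Q)=d_{n-i}$ for $0\le i\le n$. $\circ$ denotes composition. *)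

(* Defs.v *)
From HB Require Import structures.
From mathcomp Require Import all_boot all_order all_algebra.
Set Implicit Arguments. Unset Strict Implicit. Unset Printing Implicit Defensive.
Import Order.TTheory GRing.Theory Num.Theory.
Local Open Scope ring_scope.

Section Cheb.
Variable R : nzRingType.

(* (T_k, T_{k+1}) *)
Fixpoint cheb_pair (k : nat) : {poly R} * {poly R} :=
  match k with
  | 0%N => (1, 'X)
  | k'.+1 => let: (a, b) := cheb_pair k' in (b, ('X *+ 2) * b - a)
  end.

Definition cheb (k : nat) : {poly R} := (cheb_pair k).1.

(* d is the (unique) sequence of Chebyshev coefficients of Q:
   Q = \sum_{k=0}^{deg Q} d_k T_k.  Then Ch_i(Q) = d (deg Q - i). *)
Definition cheb_expansion (Q : {poly R}) (d : nat -> R) : Prop :=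
  Q = \sum_(k < (size Q).-1.+1) d k *: cheb k.
End Cheb.

(* Main.v *)
Require Import Defs.
From HB Require Import structures.
From mathcomp Require Import all_boot all_order all_algebra.
From mathcomp Require Import ring lra zify.
Set Implicit Arguments. Unset Strict Implicit. Unset Printing Implicit Defensive.
Import Order.TTheory GRing.Theory Num.Theory.
Local Open Scope ring_scope.

Section C.
Variable R : rcfType.
Notation T := (cheb R).

Lemma cheb0 : T 0 = 1. Proof. by []. Qed.
Lemma cheb1 : T 1 = 'X. Proof. by []. Qed.
Lemma chebSS k : T k.+2 = 'X *+ 2 * T k.+1 - T k.
Proof.
rewrite /cheb /=; case: (cheb_pair R k) => a b /=.
by [].
Qed.

Lemma coef_chebSS k i : (T k.+2)`_i =
  (if i is i'.+1 then (T k.+1)`_i' *+ 2 else 0) - (T k)`_i.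
Proof.
rewrite chebSS coefB mulrnAl coefMn coefXM.
by case: i => [|i] /=; rewrite ?mul0rn.
Qed.

Lemma size_cheb k : (size (T k) <= k.+1)%N.
Proof.
suff: ((size (T k) <= k.+1) && (size (T k.+1) <= k.+2))%N by case/andP.
elim: k => [|k /andP[h1 h2]].
  by rewrite cheb0 cheb1 size_poly1 size_polyX.
rewrite h2 /=; apply/leq_sizeP => j hj.
rewrite coef_chebSS; case: j hj => [//|j] hj.
move/leq_sizeP: h2 => h2; move/leq_sizeP: h1 => h1.
rewrite h2; last by lia. rewrite h1; last by lia. by rewrite mul0rn subr0.
Qed.

Lemma cheb_coef_gt k j : (k < j)%N -> (T k)`_j = 0.
Proof. by move=> h; apply/leq_sizeP: j h; apply: size_cheb. Qed.

Lemma cheb_lead k : (T k)`_k = 2 ^+ k.-1.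
Proof.
suff: ((T k)`_k = 2 ^+ k.-1) /\ ((T k.+1)`_k.+1 = 2 ^+ k).
  by case.
elim: k => [|k [h1 h2]].
  by rewrite cheb0 cheb1 coefC coefX /= expr0.
split=> //.
rewrite coef_chebSS h2 cheb_coef_gt // subr0 exprS; ring.
Qed.

Lemma cheb_coef0SS k : (T k.+2)`_0 = - (T k)`_0.
Proof. by rewrite coef_chebSS sub0r. Qed.

Lemma cheb_L1 k : (T k.+1)`_k = 0.
Proof.
elim: k => [|k IH]; first by rewrite cheb1 coefX.
by rewrite coef_chebSS IH mul0rn cheb_coef_gt // subr0.
Qed.

Lemma cheb_L2 k : (T k.+2)`_k = - (k.+2)%:R / 4 * 2 ^+ k.+1.
Proof.
elim: k => [|k IH].
  rewrite cheb_coef0SS cheb0 coefC /= expr1.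
  have h4 : (4 : R) != 0 by rewrite pnatr_eq0.
  by field.
rewrite coef_chebSS IH cheb_lead /= !exprS -!natr1.
have h4 : (4 : R) != 0 by rewrite pnatr_eq0.
rewrite -mulr_natr. field => //.
Qed.

Lemma cheb_L3 k : (T k.+3)`_k = 0.
Proof.
elim: k => [|k IH]; first by rewrite cheb_coef0SS cheb1 coefX oppr0.
by rewrite coef_chebSS IH mul0rn cheb_L1 subr0.
Qed.

Lemma cheb_L4 k : (T k.+4)`_k = (k.+4)%:R * (k.+1)%:R / 32 * 2 ^+ k.+3.
Proof.
have h32 : (32 : R) != 0 by rewrite pnatr_eq0.
elim: k => [|k IH].
  rewrite cheb_coef0SS cheb_coef0SS cheb0 coefC /=.
  rewrite !exprS expr0. field => //.
rewrite coef_chebSS IH cheb_L2 /= !exprS -!natr1 -mulr_natr.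
field => //.
Qed.

Definition Pprod b := forall c, T (c + b) * T b *+ 2 = T (c + b + b) + T c.

Lemma cheb_prod_aux b : Pprod b /\ Pprod b.+1.
Proof.
elim: b => [|b [IH0 IH1]].
  split=> c.
    by rewrite !addn0 cheb0 mulr1 mulr2n.
  rewrite !addn1 cheb1 chebSS; ring.
split=> // c.
have h1 := IH1 c.+1.
have h0 := IH0 c.+2.
set m := (c + b + b)%N.
have e1 : (c.+1 + b.+1 = c + b.+2)%N by lia.
have e2 : (c + b.+2 + b.+1 = m.+3)%N by lia.
have e3 : (c.+2 + b = c + b.+2)%N by lia.
have e4 : (c + b.+2 + b = m.+2)%N by lia.
have e5 : (c + b.+2 + b.+2 = m.+4)%N by lia.
rewrite e1 e2 in h1. rewrite e3 e4 in h0.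
rewrite e5.
have -> : T (c + b.+2) * T b.+2 *+ 2 =
   'X *+ 2 * (T (c + b.+2) * T b.+1 *+ 2) - T (c + b.+2) * T b *+ 2.
  rewrite chebSS; ring.
rewrite h1 h0 (chebSS m.+2) (chebSS c); ring.
Qed.

Lemma cheb_comp m s : T m \Po T s = T (m * s).
Proof.
suff: (T m \Po T s = T (m * s)) /\ (T m.+1 \Po T s = T (m.+1 * s)) by case.
elim: m => [|m [IH0 IH1]].
  by rewrite cheb0 -polyC1 comp_polyC cheb1 comp_polyX mul1n.
split=> //.
rewrite chebSS comp_polyB mulrnAl raddfMn /= comp_polyM comp_polyX IH0 IH1.
have := (proj1 (cheb_prod_aux s)) (m * s)%N.
have -> : (m * s + s = m.+1 * s)%N by rewrite mulSn addnC.
have -> : (m.+1 * s + s = m.+2 * s)%N by rewrite (mulSn m.+1) addnC.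
move=> h.
have -> : T (m.+2 * s) = T (m.+1 * s) * T s *+ 2 - T (m * s) by rewrite h; ring.
ring.
Qed.

Lemma coef_linpow (a b : R) k i :
  ((a *: 'X + b%:P) ^+ k)`_i = 'C(k, i)%:R * a ^+ i * b ^+ (k - i).
Proof.
elim: k i => [|k IH] i.
  rewrite expr0 coef1 bin0n sub0n expr0 mulr1.
  by case: i => [|i] /=; rewrite ?expr0 ?mulr1 ?mul0r.
rewrite exprSr mulrDr coefD -scalerAr coefZ coefMX coefMC.
case: i => [|j] /=.
  by rewrite mulr0 add0r IH !bin0 subn0 !expr0 !mul1r exprSr.
rewrite !IH binS natrD subSS.
have [hjk|hjk] := ltnP j k.
  have -> : (k - j = (k - j.+1).+1)%N by lia.
  rewrite !exprS.
  move: ('C(k,j)%:R) ('C(k,j.+1)%:R) (a^+j) (b^+(k-j.+1)) => c1 c2 x y; ring.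
rewrite (@bin_small k j.+1) ?ltnS //.
have -> : (k - j = 0)%N by lia.
rewrite exprS.
move: ('C(k,j)%:R) (a^+j) (b^+(k-j.+1)) => c1 x y; ring.
Qed.

Ltac eqnsimp := repeat match goal with
 | |- context [(?a == ?b)%N] =>
     (have -> : (a == b) = false by lia) || (have -> : (a == b) = true by lia)
 end.

Definition Mp K : {poly R} := 'X^(K.+4) - ((K.+4)%:R / 4) *: 'X^(K.+2)
   + ((K.+4)%:R * (K.+1)%:R / 32) *: 'X^K.

Lemma cheb_top K : (size (T K.+4 - 2 ^+ K.+3 *: Mp K)%R <= K)%N.
Proof.
have h4 : (4 : R) != 0 by rewrite pnatr_eq0.
have h32 : (32 : R) != 0 by rewrite pnatr_eq0.
apply/leq_sizeP => j hj.
have [i ->] : exists i, j = (i + K)%N by exists (j - K)%N; lia.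
rewrite /Mp !(coefD, coefN, coefB, coefZ, coefXn).
case: i => [|[|[|[|[|i]]]]]; rewrite ?add0n ?add1n ?add2n ?add3n ?add4n ?addSn;
  eqnsimp; rewrite /= ?mulr0 ?mulr1 ?addr0 ?add0r ?oppr0.
- rewrite cheb_L4; field => //.
- rewrite cheb_L3; field => //.
- rewrite cheb_L2; field => //.
- rewrite cheb_L1; field => //.
- rewrite cheb_lead /=; field => //.
- rewrite cheb_coef_gt; last by lia.
  field => //.
Qed.

Lemma size_lin (a b : R) : (size (a *: 'X + b%:P)%R <= 2)%N.
Proof.
apply: leq_trans (size_polyD _ _) _.
rewrite geq_max (leq_trans (size_scale_leq _ _)) ?size_polyX //.
by rewrite (leq_trans (size_polyC_leq1 _)).
Qed.

Lemma size_comp_lin (p : {poly R}) a b K :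
  (1 <= K)%N -> (size p <= K)%N -> (size (p \Po (a *: 'X + b%:P))%R <= K)%N.
Proof.
move=> hK hp; apply: leq_trans (size_comp_poly_leq _ _) _.
have hu : ((size (a *: 'X + b%:P)%R).-1 <= 1)%N 
  by case: (size (a *: 'X + b%:P)%R) (size_lin a b) => [|[|[|]]].
have := leq_mul (leqnn (size p).-1) hu; rewrite muln1 => h.
apply: leq_trans (_ : ((size p).-1).+1 <= K)%N; [by rewrite ltnS | lia].
Qed.

Lemma Q_decomp (F : {poly R}) s a b : (1 < size F)%N -> (5 <= s)%N ->
  exists K (A : R) (E : {poly R}), [/\ ((size F).-1 * s)%N = K.+4, A != 0, (size E <= K)%N &
  (F \Po T s) \Po (a *: 'X + b%:P) = A *: (Mp K \Po (a *: 'X + b%:P)) + E].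
Proof.
move=> hF hs.
set m := (size F).-1.
have hm : (1 <= m)%N by rewrite /m; lia.
have hFm : F`_m != 0.
  have : lead_coef F != 0 by rewrite lead_coef_eq0 -size_poly_gt0; lia.
  by rewrite lead_coefE.
have h2 : (2 : R) ^+ m.-1 != 0 by rewrite expf_neq0 // pnatr_eq0.
set c := F`_m / 2 ^+ m.-1.
have hc : c != 0 by rewrite mulf_neq0 // invr_eq0.
set G := F - c *: T m.
have hG : (size G <= m)%N.
  apply/leq_sizeP => j hj; rewrite /G coefB coefZ.
  have [->|hjm] := eqVneq j m.
    by rewrite cheb_lead /c divfK // subrr.
  rewrite cheb_coef_gt; last by lia.
  have /leq_sizeP hz : (size F <= j)%N by rewrite /m in hj hjm; lia.
  by rewrite hz // mulr0 subrr.
have eF : F = c *: T m + G by rewrite /G addrC subrK.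
clearbody G.
have [K eK] : exists K, (m * s)%N = K.+4.
  exists (m * s - 4)%N; nia.
have hK : (1 <= K)%N by nia.
exists K; exists (c * 2 ^+ K.+3).
exists ((c *: (T K.+4 - 2 ^+ K.+3 *: Mp K) + (G \Po T s)) \Po (a *: 'X + b%:P)).
split=> //.
- by rewrite mulf_neq0 // expf_neq0 // pnatr_eq0.
- apply: size_comp_lin => //.
  apply: leq_trans (size_polyD _ _) _.
  rewrite geq_max (leq_trans (size_scale_leq _ _)) ?cheb_top //=.
  apply: leq_trans (size_comp_poly_leq _ _) _.
  have h1 : ((size G).-1 <= m.-1)%N by lia.
  have h3 : ((size (T s)).-1 <= s)%N by have := size_cheb s; lia.
  have e : (m.-1 * s + s = m * s)%N by rewrite addnC -mulSn prednK.
  have := leq_mul h1 h3.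
  move: ((size G).-1 * (size (T s)).-1)%N (m.-1 * s)%N e => u v e; lia.
move: (Mp K) => M0.
rewrite {1}eF !comp_polyD !comp_polyZ comp_polyB comp_polyZ cheb_comp eK.
rewrite scalerBr scalerA addrA; congr (_ + _).
by rewrite [_ + (_ - _)]addrC subrK.
Qed.

Lemma bin_top2 K : ('C(K.+2, K) * 2 = K.+2 * K.+1)%N.
Proof. elim: K => [//|K IH]. rewrite binS binSn mulnDl IH. lia. Qed.
Lemma bin_top3 K : ('C(K.+3, K) * 6 = K.+3 * K.+2 * K.+1)%N.
Proof. elim: K => [//|K IH]. rewrite binS mulnDl IH.
have := bin_top2 K.+1. nia. Qed.
Lemma bin_top4 K : ('C(K.+4, K) * 24 = K.+4 * K.+3 * K.+2 * K.+1)%N.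
Proof. elim: K => [//|K IH]. rewrite binS mulnDl IH.
have := bin_top3 K.+1. nia. Qed.

Lemma binR2 K : ('C(K.+2, K)%:R : R) = (K.+2)%:R * (K.+1)%:R / 2.
Proof.
have h := bin_top2 K. have h2 : (2 : R) != 0 by rewrite pnatr_eq0.
move: (congr1 (fun n : nat => n%:R : R) h) => /=; rewrite !natrM => h'.
by rewrite -h'; field.
Qed.
Lemma binR3 K : ('C(K.+3, K)%:R : R) = (K.+3)%:R * (K.+2)%:R * (K.+1)%:R / 6.
Proof.
have h := bin_top3 K. have h2 : (6 : R) != 0 by rewrite pnatr_eq0.
move: (congr1 (fun n : nat => n%:R : R) h) => /=; rewrite !natrM => h'.
by rewrite -h'; field.
Qed.
Lemma binR4 K : ('C(K.+4, K)%:R : R) =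
   (K.+4)%:R * (K.+3)%:R * (K.+2)%:R * (K.+1)%:R / 24.
Proof.
have h := bin_top4 K. have h2 : (24 : R) != 0 by rewrite pnatr_eq0.
move: (congr1 (fun n : nat => n%:R : R) h) => /=; rewrite !natrM => h'.
by rewrite -h'; field.
Qed.

Lemma nS1 K : (K.+1)%:R = K%:R + 1 :> R. Proof. by rewrite natr1. Qed.
Lemma nS2 K : (K.+2)%:R = K%:R + 2 :> R. Proof. by rewrite -addn2 natrD. Qed.
Lemma nS3 K : (K.+3)%:R = K%:R + 3 :> R. Proof. by rewrite -addn3 natrD. Qed.
Lemma nS4 K : (K.+4)%:R = K%:R + 4 :> R. Proof. by rewrite -addn4 natrD. Qed.

Ltac mu_tac K :=
  rewrite /Mp !(comp_polyB, comp_polyD, comp_polyZ, comp_Xn_poly)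
    !(coefD, coefN, coefB, coefZ) !coef_linpow;
  rewrite ?binn ?binSn ?binR2 ?binR3 ?binR4 ?bin_small ?ltnSn ?subSS
    ?(addnK K 1) ?(addnK K 2) ?(addnK K 3) ?(addnK K 4) ?subnn //;
  rewrite ?(nS4 K) ?(nS3 K) ?(nS2 K) ?(nS1 K) ?exprSr ?expr0 ?mul0r ?mulr0 ?add0r ?addr0.

Section MU.
Variables (a b : R) (K : nat).
Let x := (K%:R : R).
Let h2 : (2 : R) != 0. Proof. by rewrite pnatr_eq0. Qed.
Let h4 : (4 : R) != 0. Proof. by rewrite pnatr_eq0. Qed.
Let h6 : (6 : R) != 0. Proof. by rewrite pnatr_eq0. Qed.
Let h24 : (24 : R) != 0. Proof. by rewrite pnatr_eq0. Qed.
Let h32 : (32 : R) != 0. Proof. by rewrite pnatr_eq0. Qed.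

Lemma Mu4 : (Mp K \Po (a *: 'X + b%:P))`_K.+4 = a ^+ K * a ^+ 4.
Proof. mu_tac K; try lia. rewrite ?exprS ?expr0; by field. Qed.
Lemma Mu3 : (Mp K \Po (a *: 'X + b%:P))`_K.+3 = a ^+ K * ((x + 4) * a ^+ 3 * b).
Proof. mu_tac K; try lia. rewrite ?exprS ?expr0; by field. Qed.
Lemma Mu2 : (Mp K \Po (a *: 'X + b%:P))`_K.+2 =
  a ^+ K * ((x + 4) * (x + 3) / 2 * a ^+ 2 * b ^+ 2 - (x + 4) / 4 * a ^+ 2).
Proof. mu_tac K; try lia. rewrite ?exprS ?expr0; by field. Qed.
Lemma Mu1 : (Mp K \Po (a *: 'X + b%:P))`_K.+1 =
  a ^+ K * ((x + 4) * (x + 3) * (x + 2) / 6 * a * b ^+ 3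
            - (x + 4) / 4 * (x + 2) * a * b).
Proof. mu_tac K; try lia. rewrite ?exprS ?expr0; by field. Qed.
Lemma Mu0 : (Mp K \Po (a *: 'X + b%:P))`_K =
  a ^+ K * ((x + 4) * (x + 3) * (x + 2) * (x + 1) / 24 * b ^+ 4
            - (x + 4) / 4 * ((x + 2) * (x + 1) / 2) * b ^+ 2
            + (x + 4) * (x + 1) / 32).
Proof. mu_tac K; try lia. rewrite ?exprS ?expr0; by field. Qed.
End MU.

Lemma coef_chebsum (d : nat -> R) K j : (K <= j)%N ->
  (\sum_(k < K.+4.+1) d k *: T k)`_j =
  d K * (T K)`_j + d K.+1 * (T K.+1)`_j + d K.+2 * (T K.+2)`_j
  + d K.+3 * (T K.+3)`_j + d K.+4 * (T K.+4)`_j.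
Proof.
move=> hj; rewrite coef_sum !big_ord_recr /= big1 ?add0r ?coefZ //.
move=> k _; rewrite coefZ cheb_coef_gt ?mulr0 //.
have := ltn_ord k; lia.
Qed.

Lemma eq_from (L R0 X Y c : R) : L = R0 -> X - Y = c * (L - R0) -> X = Y.
Proof. by move=> -> /eqP; rewrite subrr mulr0 subr_eq0 => /eqP. Qed.

Lemma sq1 (a : R) : a ^+ 2 = 1 -> a = 1 \/ a = -1.
Proof.
move=> h.
have : (a - 1) * (a + 1) = 0.
  by rewrite (_ : (a - 1) * (a + 1) = a ^+ 2 - 1); [rewrite h subrr | ring].
move/eqP; rewrite mulf_eq0 => /orP[|]; rewrite ?subr_eq0 ?addr_eq0 => /eqP; auto.
Qed.

Lemma alg1 (a b x : R) : 0 <= x -> 2 * (x + 3) * b ^+ 2 = 1 - a ^+ 2 ->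
  b * ((x + 3) * (x + 2) / 6 * b ^+ 2 - (x + 2) / 4 + (x + 3) / 4 * a ^+ 2) = 0 ->
  ((a = 1 \/ a = -1) /\ b = 0) \/
  (4 * b ^+ 2 = 6 / ((x + 4 - 1) * (2 * (x + 4) - 1)) /\
   a ^+ 2 = (2 * (x + 4) - 4) / (2 * (x + 4) - 1)).
Proof.
move=> hx E2 E3.
have ha2 : a ^+ 2 = 1 - 2 * (x + 3) * b ^+ 2 by rewrite E2; ring.
have [hb0|hb] := eqVneq b 0.
  left; split=> //; apply: sq1; rewrite ha2 hb0; ring.
right.
have h3 : x + 3 != 0 by rewrite lt0r_neq0 //; lra.
have h7 : 2 * x + 7 != 0 by rewrite lt0r_neq0 //; lra.
have h7' : 2 * (x + 4) - 1 != 0 by rewrite lt0r_neq0 //; lra.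
have h3' : x + 4 - 1 != 0 by rewrite lt0r_neq0 //; lra.
have h2 : (2 : R) != 0 by rewrite pnatr_eq0.
have h4 : (4 : R) != 0 by rewrite pnatr_eq0.
have h6 : (6 : R) != 0 by rewrite pnatr_eq0.
move/eqP: E3; rewrite mulf_eq0 (negbTE hb) /= ha2 => /eqP E3.
have hb2 : b ^+ 2 * ((x + 3) * (2 * x + 7)) = 3 / 2.
  apply: (eq_from (c := -6) E3); field=> //.
split.
  apply: (eq_from (c := 4 / ((x + 3) * (2 * x + 7))) hb2); field=> //.
  by rewrite h7 h3.
apply: (eq_from (c := -2 / (2 * x + 7)) hb2); field=> //.
Qed.

Lemma alg2 (a b x : R) : 0 <= x -> 2 * (x + 3) * b ^+ 2 = 1 - a ^+ 2 ->
  (x + 3) * (x + 2) / 24 * b ^+ 4 - (x + 2) / 8 * b ^+ 2 + 1 / 32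
     = (a ^+ 2) ^+ 2 / 32 ->
  ((a = 1 \/ a = -1) /\ b = 0) \/
  (4 * b ^+ 2 = 12 / ((x + 4 - 1) * (2 * (x + 4) - 1)) /\
   a ^+ 2 = (2 * (x + 4) - 7) / (2 * (x + 4) - 1)).
Proof.
move=> hx E2 E4.
have ha2 : a ^+ 2 = 1 - 2 * (x + 3) * b ^+ 2 by rewrite E2; ring.
have [hb0|hb] := eqVneq b 0.
  left; split=> //; apply: sq1; rewrite ha2 hb0; ring.
right.
have h3 : x + 3 != 0 by rewrite lt0r_neq0 //; lra.
have h7 : 2 * x + 7 != 0 by rewrite lt0r_neq0 //; lra.
have h7' : 2 * (x + 4) - 1 != 0 by rewrite lt0r_neq0 //; lra.
have h3' : x + 4 - 1 != 0 by rewrite lt0r_neq0 //; lra.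
have h2 : (2 : R) != 0 by rewrite pnatr_eq0.
have h8 : (8 : R) != 0 by rewrite pnatr_eq0.
have h24 : (24 : R) != 0 by rewrite pnatr_eq0.
have h32 : (32 : R) != 0 by rewrite pnatr_eq0.
rewrite ha2 in E4.
have Eb : b ^+ 2 * (b ^+ 2 * ((x + 3) * (2 * x + 7)) - 3) = 0.
  rewrite -[RHS](subrr 0).
  apply: (eq_from (c := -24) E4); field=> //.
move/eqP: Eb; rewrite mulf_eq0 expf_eq0 /= (negbTE hb) /= subr_eq0 => /eqP hb2.
split.
  apply: (eq_from (c := 4 / ((x + 3) * (2 * x + 7))) hb2); field=> //.
  by rewrite h7 h3.
rewrite ha2; apply: (eq_from (c := -2 / (2 * x + 7)) hb2); field=> //.
Qed.

Lemma eq_from2 (L1 R1 L2 R2 X Y c1 c2 : R) : L1 = R1 -> L2 = R2 ->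
  X - Y = c1 * (L1 - R1) + c2 * (L2 - R2) -> X = Y.
Proof. by move=> -> -> /eqP; rewrite !subrr !mulr0 addr0 subr_eq0 => /eqP. Qed.

Lemma size_Mp K : (size (Mp K) <= K.+4.+1)%N.
Proof.
rewrite /Mp; apply: leq_trans (size_polyD _ _) _.
rewrite geq_max; apply/andP; split.
  apply: leq_trans (size_polyD _ _) _.
  rewrite geq_max size_polyN size_polyXn leqnn /=.
  apply: leq_trans (size_scale_leq _ _) _; rewrite size_polyXn; lia.
apply: leq_trans (size_scale_leq _ _) _; rewrite size_polyXn; lia.
Qed.
End C.

Unset Implicit Arguments.

Theorem lemma3p5 (R : rcfType) (F : {poly R}) (s : nat) (alpha beta : R) :
  (1 < size F)%N -> (5 <= s)%N -> alpha != 0 ->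
  let Q := (F \Po cheb R s) \Po (alpha *: 'X + beta%:P) in
  let n := (size Q).-1 in
  forall d : nat -> R, cheb_expansion Q d ->
  let trivial_case := (alpha = 1 \/ alpha = -1) /\ beta = 0 in
  (* part 1: Ch_2(Q) = Ch_3(Q) = 0 *)
  ((d (n - 2)%N = 0 -> d (n - 3)%N = 0 ->
     trivial_case \/
     (4 * beta ^+ 2 = 6 / ((n%:R - 1) * (2 * n%:R - 1)) /\
      alpha ^+ 2 = (2 * n%:R - 4) / (2 * n%:R - 1)))
  /\
  (* part 2: Ch_2(Q) = Ch_4(Q) = 0 *)
   (d (n - 2)%N = 0 -> d (n - 4)%N = 0 ->
     trivial_case \/
     (4 * beta ^+ 2 = 12 / ((n%:R - 1) * (2 * n%:R - 1)) /\
      alpha ^+ 2 = (2 * n%:R - 7) / (2 * n%:R - 1)))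
  /\
  (* in particular *)
   ((d (n - 2)%N = 0 /\ (d (n - 3)%N = 0 \/ d (n - 4)%N = 0)) ->
     ~ trivial_case -> alpha ^+ 2 < 1 /\ beta != 0)).
Proof.
move=> hF hs ha Q n d hd tc.
have [K [A [E [eK hA hE eQ]]]] := Q_decomp alpha beta hF hs.
have eQ' : Q = A *: (Mp R K \Po (alpha *: 'X + beta%:P)) + E := eQ.
move/leq_sizeP: hE => hE.
have cQ : forall j, (K <= j)%N -> Q`_j = A * (Mp R K \Po (alpha *: 'X + beta%:P))`_j.
  by move=> j hj; rewrite eQ' coefD coefZ hE // addr0.
have hP : alpha ^+ K != 0 by rewrite expf_neq0.
have hsz : size Q = K.+4.+1.
  apply/eqP; rewrite eqn_leq; apply/andP; split.
    apply/leq_sizeP => j hj; rewrite cQ; last by lia.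
    have hs5 := size_comp_lin alpha beta (isT : (1 <= K.+4.+1)%N) (size_Mp R K).
    by move/leq_sizeP: hs5 => ->; rewrite ?mulr0.
  rewrite ltnNge; apply/negP => /leq_sizeP h.
  have := h _ (leqnn _); rewrite cQ; last by lia.
  rewrite Mu4 => h0.
  by move: (mulf_neq0 hA (mulf_neq0 hP (expf_neq0 4 ha))); rewrite h0 eqxx.
have hn : n = K.+4 by rewrite /n hsz.
move: hd; rewrite /cheb_expansion hsz /= => hd.
have dq : forall j, (K <= j)%N -> Q`_j =
  d K * (cheb R K)`_j + d K.+1 * (cheb R K.+1)`_j + d K.+2 * (cheb R K.+2)`_j
  + d K.+3 * (cheb R K.+3)`_j + d K.+4 * (cheb R K.+4)`_j.
  by move=> j hj; rewrite {1}hd coef_chebsum.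
have EE : forall j, (K <= j)%N -> A * (Mp R K \Po (alpha *: 'X + beta%:P))`_j =
  d K * (cheb R K)`_j + d K.+1 * (cheb R K.+1)`_j + d K.+2 * (cheb R K.+2)`_j
  + d K.+3 * (cheb R K.+3)`_j + d K.+4 * (cheb R K.+4)`_j.
  by move=> j hj; rewrite -cQ // dq.
have e4 := EE K.+4 ltac:(lia).
have e3 := EE K.+3 ltac:(lia).
have e2 := EE K.+2 ltac:(lia).
have e1 := EE K.+1 ltac:(lia).
have e0 := EE K (leqnn K).
rewrite Mu4 in e4; rewrite Mu3 in e3; rewrite Mu2 in e2; rewrite Mu1 in e1;
  rewrite Mu0 in e0.
rewrite ?cheb_lead ?cheb_L1 ?cheb_L2 ?cheb_L3 ?cheb_L4 in e4 e3 e2 e1 e0.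
repeat (rewrite cheb_coef_gt in e4; last by lia).
repeat (rewrite cheb_coef_gt in e3; last by lia).
repeat (rewrite cheb_coef_gt in e2; last by lia).
repeat (rewrite cheb_coef_gt in e1; last by lia).
rewrite /= ?mulr0 ?add0r ?addr0 ?(nS4 R K) ?(nS3 R K) ?(nS2 R K) ?(nS1 R K) in e4 e3 e2 e1 e0.
rewrite /tc hn.
have -> : (K.+4 - 2 = K.+2)%N by lia.
have -> : (K.+4 - 3 = K.+1)%N by lia.
have -> : (K.+4 - 4 = K)%N by lia.
rewrite (nS4 R K).
rewrite !(exprS 2) in e4 e3 e2 e1 e0.
set x := (K%:R : R) in e4 e3 e2 e1 e0 *.
have hx : 0 <= x by rewrite ler0n.
set t := (2 : R) ^+ K in e4 e3 e2 e1 e0.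
set P := alpha ^+ K in e4 e3 e2 e1 e0 hP.
clearbody t P.
have h2 : (2 : R) != 0 by rewrite pnatr_eq0.
have h4 : (4 : R) != 0 by rewrite pnatr_eq0.
have h6 : (6 : R) != 0 by rewrite pnatr_eq0.
have h8 : (8 : R) != 0 by rewrite pnatr_eq0.
have h24 : (24 : R) != 0 by rewrite pnatr_eq0.
have h32 : (32 : R) != 0 by rewrite pnatr_eq0.
have hx4 : x + 4 != 0 by rewrite lt0r_neq0 //; lra.
have hx1 : x + 1 != 0 by rewrite lt0r_neq0 //; lra.
have hAP : A * P != 0 by rewrite mulf_neq0.
have E2 : d K.+2 = 0 -> 2 * (x + 3) * beta ^+ 2 = 1 - alpha ^+ 2.
  move=> hD2; rewrite hD2 in e2.
  have key : A * P * alpha ^+ 2 * (x + 4) / 4 *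
      (2 * (x + 3) * beta ^+ 2 - (1 - alpha ^+ 2)) = 0.
    apply: (eq_from2 (c1 := 1) (c2 := (x + 4) / 4) e2 e4); field=> //.
  have hk : A * P * alpha ^+ 2 * (x + 4) / 4 != 0.
    by rewrite !mulf_neq0 ?invr_neq0 ?expf_neq0.
  move/eqP: key; rewrite mulf_eq0 (negbTE hk) /= subr_eq0 => /eqP //.
have P1 : d K.+2 = 0 -> d K.+1 = 0 ->
   (alpha = 1 \/ alpha = -1) /\ beta = 0 \/
   4 * beta ^+ 2 = 6 / ((x + 4 - 1) * (2 * (x + 4) - 1)) /\
   alpha ^+ 2 = (2 * (x + 4) - 4) / (2 * (x + 4) - 1).
  move=> hD2 hD1; apply: alg1 => //; first exact: E2.
  rewrite hD1 in e1.
  have key : A * P * alpha * (x + 4) *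
      (beta * ((x + 3) * (x + 2) / 6 * beta ^+ 2 - (x + 2) / 4
        + (x + 3) / 4 * alpha ^+ 2)) = 0.
    apply: (eq_from2 (c1 := 1) (c2 := (x + 3) / 4) e1 e3); field=> //.
  have hk : A * P * alpha * (x + 4) != 0 by rewrite !mulf_neq0.
  by move/eqP: key; rewrite mulf_eq0 (negbTE hk) /= => /eqP.
have P2 : d K.+2 = 0 -> d K = 0 ->
   (alpha = 1 \/ alpha = -1) /\ beta = 0 \/
   4 * beta ^+ 2 = 12 / ((x + 4 - 1) * (2 * (x + 4) - 1)) /\
   alpha ^+ 2 = (2 * (x + 4) - 7) / (2 * (x + 4) - 1).
  move=> hD2 hD0; apply: alg2 => //; first exact: E2.
  rewrite hD0 hD2 in e0.
  have key : A * P * (x + 4) * (x + 1) *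
      ((x + 3) * (x + 2) / 24 * beta ^+ 4 - (x + 2) / 8 * beta ^+ 2 + 1 / 32
        - (alpha ^+ 2) ^+ 2 / 32) = 0.
    apply: (eq_from2 (c1 := 1) (c2 := - ((x + 4) * (x + 1) / 32)) e0 e4).
    field=> //.
  have hk : A * P * (x + 4) * (x + 1) != 0 by rewrite !mulf_neq0.
  move/eqP: key; rewrite mulf_eq0 (negbTE hk) /= subr_eq0 => /eqP //.
split; first exact: P1.
split; first exact: P2.
have hD : 0 < (x + 4 - 1) * (2 * (x + 4) - 1) by apply: mulr_gt0; lra.
have hD' : 0 < 2 * (x + 4) - 1 by lra.
move=> [hD2 hDD] hnt.
have fin : forall c e : R, 0 < c -> e < 2 * (x + 4) - 1 ->
    4 * beta ^+ 2 = c / ((x + 4 - 1) * (2 * (x + 4) - 1)) ->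
    alpha ^+ 2 = e / (2 * (x + 4) - 1) -> alpha ^+ 2 < 1 /\ beta != 0.
  move=> c e hc he hb ha2; split.
    by rewrite ha2 ltr_pdivrMr // mul1r.
  apply/eqP => hb0; move: hb; rewrite hb0 expr0n /= mulr0 => /esym/eqP h.
  by move: (lt0r_neq0 (divr_gt0 hc hD)); rewrite h.
case: hDD => hDi.
  case: (P1 hD2 hDi) => // -[hb ha2].
  by apply: (fin 6 (2 * (x + 4) - 4)) => //; lra.
case: (P2 hD2 hDi) => // -[hb ha2].
by apply: (fin 12 (2 * (x + 4) - 7)) => //; lra.
Qed.
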